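(* Let $T\ge 1$ be an integer, $\Delta t>0$, $E_0\in\mathbb{R}$, $P_{\max}>0$, charging and discharging efficiencies $\eta_{c},\eta_{d}\in(0,1]$, and a net-charge efficiency $\eta\in[\eta_{c},\tfrac{1}{\eta_{d}}]$. Let $\mathbf{A}\in\mathbb{R}^{T\times T}$ be the lower triangular matrix with $\mathbf{A}_{lk}=\Delta t$ for $k\le l$ and $\mathbf{A}_{lk}=0$ for $k>l$, and let $\mathbf{1}_T=(1,\dots,1)^\top\in\mathbb{R}^T$. Let $\mathbf{P}_c,\mathbf{P}_d,\mathbf{P}^r_c,\mathbf{P}^r_d\in[0,P_{\max}]^T$ and $\mathbf{P}_b\in\mathbb{R}^T$ be such that $$\mathbf{P}_b=\mathbf{P}_c-\mathbf{P}_d=\mathbf{P}^r_c-\mathbf{P}^r_d,$$ with $\mathbf{P}_c\cdot\mathbf{P}_d=\mathbf{0}$ and $\mathbf{P}^r_c\cdot\mathbf{P}^r_d\ge\mathbf{0}$ (componentwise products). Define the SoC trajectories $$\mathbf{E}(\mathbf{P}_c,\mathbf{P}_d)=\mathbf{1}_TE_0+\eta_c\mathbf{A}\mathbf{P}_c-\tfrac{1}{\eta_d}\mathbf{A}\mathbf{P}_d,\qquad \mathbf{E}^r(\mathbf{P}^r_c,\mathbf{P}^r_d)=\mathbf{1}_TE_0+\eta_c\mathbf{A}\mathbf{P}^r_c-\tfrac{1}{\eta_d}\mathbf{A}\mathbf{P}^r_d,$$ $$\mathbf{E}^s(\mathbf{P}_b)=\mathbf{1}_TE_0+\eta\,\mathbf{A}\mathbf{P}_b.$$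 Then, componentwise, $$\mathbf{E}^r(\mathbf{P}^r_c,\mathbf{P}^r_d)\le\mathbf{E}(\mathbf{P}_c,\mathbf{P}_d)\le\mathbf{E}^s(\mathbf{P}_b).$$
   Context: This models a battery over time steps $k=0,\dots,T-1$ of duration $\Delta t$: $\mathbf{E}$ is the actual (standard-model) state-of-charge trajectory under charging input $\mathbf{P}_c$ and discharging input $\mathbf{P}_d$ that are never simultaneously nonzero; $\mathbf{E}^r$ is the trajectory of the relaxed model, in which simultaneous charging and discharging is allowed; $\mathbf{E}^s$ is the trajectory of the simplified one-input model driven by the net-charging input $\mathbf{P}_b$ with a single efficiency $\eta$. Vector inequalities and products are taken componentwise. *)

(* Defs.v *)
From mathcomp Require Import all_boot all_order all_algebra.
Set Implicit Arguments. Unset Strict Implicit. Unset Printing Implicit Defensive.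
Import Order.TTheory GRing.Theory Num.Theory.
Local Open Scope ring_scope.

Definition Amx (R : ringType) (T : nat) (dt : R) : 'M[R]_T :=
  \matrix_(l < T, k < T) (if (k <= l)%N then dt else 0).

Definition ones (R : ringType) (T : nat) : 'cV[R]_T := const_mx 1.

Definition Esoc (R : fieldType) (T : nat) (dt E0 eta_c eta_d : R)
  (Pc Pd : 'cV[R]_T) : 'cV[R]_T :=
  E0 *: ones R T + eta_c *: (Amx T dt *m Pc) - eta_d^-1 *: (Amx T dt *m Pd).

Definition Esimp (R : fieldType) (T : nat) (dt E0 eta : R)
  (Pb : 'cV[R]_T) : 'cV[R]_T :=
  E0 *: ones R T + eta *: (Amx T dt *m Pb).

Definition vle (R : numDomainType) (T : nat) (u v : 'cV[R]_T) : Prop :=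
  forall i : 'I_T, u i 0 <= v i 0.

(* Main.v *)
Require Import Defs.
From mathcomp Require Import all_boot all_order all_algebra.
From mathcomp Require Import ring lra.
Import Order.TTheory GRing.Theory Num.Theory.
Local Open Scope ring_scope.

Lemma Esoc_E (R : realFieldType) (T : nat) (dt E0 a b : R) (Pc Pd : 'cV[R]_T) i :
  Esoc dt E0 a b Pc Pd i 0 =
  E0 + \sum_k Amx T dt i k * (a * Pc k 0 - b^-1 * Pd k 0).
Proof.
rewrite /Esoc /ones !mxE mulr1 !big_distrr /= -addrA; congr (_ + _).
rewrite -sumrN -big_split /=; apply: eq_bigr => k _; ring.
Qed.

Lemma Esimp_E (R : realFieldType) (T : nat) (dt E0 a : R) (Pb : 'cV[R]_T) i :
  Esimp dt E0 a Pb i 0 = E0 + \sum_k Amx T dt i k * (a * Pb k 0).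
Proof.
rewrite /Esimp /ones !mxE mulr1 big_distrr /=; congr (_ + _).
apply: eq_bigr => k _; ring.
Qed.

Theorem lemma1 (R : realFieldType) (T : nat) (hT : (1 <= T)%N)
  (dt E0 Pmax eta_c eta_d eta : R)
  (hdt : 0 < dt) (hPmax : 0 < Pmax)
  (hc0 : 0 < eta_c) (hc1 : eta_c <= 1)
  (hd0 : 0 < eta_d) (hd1 : eta_d <= 1)
  (he0 : eta_c <= eta) (he1 : eta <= eta_d^-1)
  (Pc Pd Prc Prd Pb : 'cV[R]_T)
  (hPc : forall i, 0 <= Pc i 0 <= Pmax)
  (hPd : forall i, 0 <= Pd i 0 <= Pmax)
  (hPrc : forall i, 0 <= Prc i 0 <= Pmax)
  (hPrd : forall i, 0 <= Prd i 0 <= Pmax)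
  (hb : Pb = Pc - Pd) (hbr : Pb = Prc - Prd)
  (hcd : forall i, Pc i 0 * Pd i 0 = 0)
  (hcdr : forall i, 0 <= Prc i 0 * Prd i 0) :
  vle (Esoc dt E0 eta_c eta_d Prc Prd) (Esoc dt E0 eta_c eta_d Pc Pd) /\
  vle (Esoc dt E0 eta_c eta_d Pc Pd) (Esimp dt E0 eta Pb).
Proof.
have hbk : forall k, Pb k 0 = Pc k 0 - Pd k 0 by move=> k; rewrite hb !mxE.
have hbrk : forall k, Pb k 0 = Prc k 0 - Prd k 0 by move=> k; rewrite hbr !mxE.
have hu : 1 <= eta_d^-1 by rewrite invr_ge1 // ?unitfE ?gt_eqF.
set u := eta_d^-1 in hu he1 *.
have hA : forall i k, 0 <= Amx T dt i k.
  by move=> i k; rewrite mxE; case: ifP => _; lra.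
split=> i; rewrite !Esoc_E ?Esimp_E lerD2l; apply: ler_sum => k _;
  apply: ler_wpM2l => //.
- have e1 : Pc k 0 - Pd k 0 = Prc k 0 - Prd k 0.
    by rewrite -hbk -hbrk.
  have := hPrc k; have := hPrd k; have := hPc k; have := hPd k.
  move=> /andP[? ?] /andP[? ?] /andP[? ?] /andP[? ?].
  have := hcd k; move/eqP; rewrite mulf_eq0 => /orP[/eqP h|/eqP h].
  + have ? : (eta_c - u) * Prc k 0 <= 0 by nra.
    rewrite -/u h in e1 *; nra.
  + have ? : (eta_c - u) * Prd k 0 <= 0 by nra.
    rewrite -/u h in e1 *; nra.
- rewrite hbk -/u.
  have := hPc k; have := hPd k.
  move=> /andP[? ?] /andP[? ?].
  have := hcd k; move/eqP; rewrite mulf_eq0 => /orP[/eqP h|/eqP h]; rewrite h.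
  + have ? : (u - eta) * Pd k 0 >= 0 by nra.
    nra.
  + have ? : (eta - eta_c) * Pc k 0 >= 0 by nra.
    nra.
Qed.
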